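(* Let $K<0$ and $d\ge 1$, and let $\mathbb{H}^d_K=\{\mathbf{x}\in\mathbb{R}^{d+1} : \langle \mathbf{x},\mathbf{x}\rangle_L = 1/K,\ x_0>0\}$, where $\langle \mathbf{x},\mathbf{y}\rangle_L=-x_0y_0+\sum_{i=1}^d x_iy_i$. Let $\mathbf{x}_1,\dots,\mathbf{x}_n\in\mathbb{H}^d_K$ with $n\ge 2$, let $\bar{\mathbf{x}}=\frac1n\sum_{i=1}^n \mathbf{x}_i$ be their Euclidean mean in $\mathbb{R}^{d+1}$, and let $\mathbf{m}^{\mathrm{Euc}}=\Pi_K(\bar{\mathbf{x}})$. Then $$ r(\mathbf{m}^{\mathrm{Euc}})\le \frac1n\sum_{i=1}^n r(\mathbf{x}_i),$$ with equality if and only if all the $\mathbf{x}_i$ are identical.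
   Context: For $\mathbf{v}\in\mathbb{R}^{d+1}$ with $\langle\mathbf{v},\mathbf{v}\rangle_L<0$ and $v_0>0$, the Lorentz projection is $\Pi_K(\mathbf{v})=\mathbf{v}/\sqrt{K\langle \mathbf{v},\mathbf{v}\rangle_L}$, the unique positive rescaling of $\mathbf{v}$ lying on $\mathbb{H}^d_K$. The radial depth of $\mathbf{x}\in\mathbb{H}^d_K$ is $r(\mathbf{x})=x_0$ (its $0$-th coordinate). *)

(* Defs.v *)
(* R : realType, points of R^{d+1} as row vectors 'rV[R]_(d.+1),
   coordinate 0 is the "time" coordinate x_0. *)
From HB Require Import structures.
From mathcomp Require Import all_boot all_order all_algebra.
From mathcomp Require Import reals.
Set Implicit Arguments. Unset Strict Implicit. Unset Printing Implicit Defensive.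
Import Order.TTheory GRing.Theory Num.Theory.
Local Open Scope ring_scope.

Definition lorentz (R : realType) (d : nat) (x y : 'rV[R]_d.+1) : R :=
  - (x 0 ord0 * y 0 ord0) + \sum_(i < d) x 0 (lift ord0 i) * y 0 (lift ord0 i).

Definition in_hyperboloid (R : realType) (d : nat) (K : R) (x : 'rV[R]_d.+1) : Prop :=
  lorentz x x = K^-1 /\ 0 < x 0 ord0.

Definition lorentz_proj (R : realType) (d : nat) (K : R) (v : 'rV[R]_d.+1) : 'rV[R]_d.+1 :=
  (Num.sqrt (K * lorentz v v))^-1 *: v.

Definition radial (R : realType) (d : nat) (x : 'rV[R]_d.+1) : R := x 0 ord0.

(* Main.v *)
Require Import Defs.
From HB Require Import structures.
From mathcomp Require Import all_boot all_order all_algebra.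
From mathcomp Require Import reals ring lra.
Import Order.TTheory GRing.Theory Num.Theory.
Local Open Scope ring_scope.

Lemma lorentzDl (R : realType) d (x y z : 'rV[R]_d.+1) :
  lorentz (x + y) z = lorentz x z + lorentz y z.
Proof.
rewrite /lorentz !mxE; under eq_bigr => i _ do rewrite !mxE mulrDl.
rewrite big_split /=; ring.
Qed.

Lemma lorentz0l (R : realType) d (z : 'rV[R]_d.+1) : lorentz 0 z = 0.
Proof.
rewrite /lorentz mxE mul0r oppr0 add0r; apply: big1 => i _; by rewrite mxE mul0r.
Qed.

Lemma lorentzZl (R : realType) d c (x y : 'rV[R]_d.+1) :
  lorentz (c *: x) y = c * lorentz x y.
Proof.
rewrite /lorentz mxE; under eq_bigr => i _ do rewrite mxE -mulrA.
rewrite -mulr_sumr; ring.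
Qed.

Lemma lorentzC (R : realType) d (x y : 'rV[R]_d.+1) : lorentz x y = lorentz y x.
Proof.
rewrite /lorentz; congr (- _ + _); [exact: mulrC | apply: eq_bigr => i _; exact: mulrC].
Qed.

Lemma lorentz_suml (R : realType) d n (f : 'I_n -> 'rV[R]_d.+1) y :
  lorentz (\sum_(i < n) f i) y = \sum_(i < n) lorentz (f i) y.
Proof.
apply: (big_morph (fun x => lorentz x y)); [move=> a b /=; exact: lorentzDl | exact: lorentz0l].
Qed.

Lemma pairQ (R : realType) d (K : R) (x y : 'rV[R]_d.+1) : K < 0 ->
  in_hyperboloid K x -> in_hyperboloid K y ->
  0 <= K^-1 - lorentz x y /\ (K^-1 - lorentz x y = 0 -> x = y).
Proof.
move=> K0 [hx tx] [hy ty].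
have E : 2 * (x 0 ord0 * y 0 ord0) * (K^-1 - lorentz x y) =
   - K^-1 * (x 0 ord0 - y 0 ord0)^+2 +
   \sum_(k < d) (y 0 ord0 * x 0 (lift ord0 k) - x 0 ord0 * y 0 (lift ord0 k))^+2.
  have -> : \sum_(k < d) (y 0 ord0 * x 0 (lift ord0 k) - x 0 ord0 * y 0 (lift ord0 k))^+2
     = (y 0 ord0)^+2 * \sum_(k < d) x 0 (lift ord0 k) * x 0 (lift ord0 k)
     + (x 0 ord0)^+2 * \sum_(k < d) y 0 (lift ord0 k) * y 0 (lift ord0 k)
     - 2 * (x 0 ord0 * y 0 ord0) * \sum_(k < d) x 0 (lift ord0 k) * y 0 (lift ord0 k).
    rewrite !mulr_sumr -big_split -sumrB; apply: eq_bigr => k _ /=; ring.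
  move: hx hy; rewrite /lorentz => hx hy.
  have ha : \sum_(k < d) x 0 (lift ord0 k) * x 0 (lift ord0 k) = K^-1 + x 0 ord0 * x 0 ord0.
    by rewrite -hx; ring.
  have hb : \sum_(k < d) y 0 (lift ord0 k) * y 0 (lift ord0 k) = K^-1 + y 0 ord0 * y 0 ord0.
    by rewrite -hy; ring.
  rewrite ha hb; ring.
have Kp : 0 < - K^-1 by rewrite oppr_gt0 invr_lt0.
have r1 : 0 <= - K^-1 * (x 0 ord0 - y 0 ord0)^+2 by rewrite mulr_ge0 ?sqr_ge0 // ltW.
have r2 : 0 <= \sum_(k < d) (y 0 ord0 * x 0 (lift ord0 k) - x 0 ord0 * y 0 (lift ord0 k))^+2.
  by apply: sumr_ge0 => k _; rewrite sqr_ge0.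
have tt : 0 < 2 * (x 0 ord0 * y 0 ord0) by rewrite mulr_gt0 // mulr_gt0.
split.
  by rewrite -(pmulr_rge0 _ tt) E addr_ge0.
move=> Q0.
have : - K^-1 * (x 0 ord0 - y 0 ord0)^+2 +
   \sum_(k < d) (y 0 ord0 * x 0 (lift ord0 k) - x 0 ord0 * y 0 (lift ord0 k))^+2 = 0.
  by rewrite -E Q0 mulr0.
move/eqP; rewrite paddr_eq0 // => /andP [/eqP e1 /eqP e2].
have exy : x 0 ord0 = y 0 ord0.
  move: e1 => /eqP; rewrite mulf_eq0 sqrf_eq0 subr_eq0 => /orP [/eqP h|/eqP //].
  by move: Kp; rewrite h ltxx.
have e3 := psumr_eq0P (fun k _ => sqr_ge0 _) e2.
apply/rowP => j; case: (unliftP ord0 j) => [k ->|->]; last by rewrite exy.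
have := e3 k isT; move/eqP; rewrite sqrf_eq0 subr_eq0 exy => /eqP.
apply: mulfI; by rewrite -exy gt_eqF.
Qed.
Arguments pairQ {R d K x y}.
Theorem proposition4p3 (R : realType) (K : R) (d n : nat)
    (xs : 'I_n -> 'rV[R]_d.+1) :
  K < 0 -> (1 <= d)%N -> (2 <= n)%N ->
  (forall i, in_hyperboloid K (xs i)) ->
  let xbar := n%:R^-1 *: \sum_(i < n) xs i in
  let mEuc := lorentz_proj K xbar in
  radial mEuc <= n%:R^-1 * \sum_(i < n) radial (xs i) /\
  (radial mEuc = n%:R^-1 * \sum_(i < n) radial (xs i) <->
     forall i j, xs i = xs j).
Proof.
move=> K0 _ n2 H xbar mEuc.
have n0 : (0 < n)%N by apply: leq_trans n2.
have nR : (0 : R) < n%:R by rewrite ltr0n.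
set S := \sum_(i < n) \sum_(j < n) (K^-1 - lorentz (xs i) (xs j)).
have S0 : 0 <= S.
  by apply: sumr_ge0 => i _; apply: sumr_ge0 => j _; case: (pairQ K0 (H i) (H j)).
have HL : lorentz xbar xbar = K^-1 - (n%:R^-1 * n%:R^-1) * S.
  rewrite /xbar lorentzZl lorentzC lorentzZl lorentz_suml.
  under eq_bigr => i _ do rewrite lorentzC lorentz_suml.
  have -> : S = K^-1 * n%:R * n%:R - \sum_(i < n) \sum_(j < n) lorentz (xs i) (xs j).
    rewrite /S; under eq_bigr => i _ do rewrite sumrB sumr_const card_ord.
    by rewrite sumrB sumr_const card_ord !mulr_natr.
  rewrite [in LHS]exchange_big /=.
  set T := \sum_(i < n) _; field; by rewrite (lt_eqF K0) (gt_eqF nR).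
have KL : K * lorentz xbar xbar = 1 - K * (n%:R^-1 * n%:R^-1) * S.
  by rewrite HL mulrBr mulfV ?lt_eqF // mulrA.
have KLge : 1 <= K * lorentz xbar xbar.
  have h : 0 <= (-K) * (n%:R^-1 * n%:R^-1) * S.
    by rewrite mulr_ge0 // mulr_ge0 ?oppr_ge0 ?ltW // mulr_gt0 // invr_gt0.
  rewrite !mulNr in h; rewrite KL; lra.
set s := Num.sqrt (K * lorentz xbar xbar).
have s1 : 1 <= s by rewrite /s -sqrtr1 ler_sqrt // ltW // (lt_le_trans ltr01).
have s0 : 0 < s by apply: lt_le_trans s1.
have Ea : radial mEuc = s^-1 * (n%:R^-1 * \sum_(i < n) radial (xs i)).
  rewrite /radial /mEuc /lorentz_proj -/s /xbar. by rewrite !mxE summxE.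
set a := n%:R^-1 * \sum_(i < n) radial (xs i).
have a0 : 0 < a.
  rewrite /a mulr_gt0 ?invr_gt0 //.
  rewrite (bigD1 (Ordinal n0)) //=.
  have h1 : 0 < radial (xs (Ordinal n0)) by case: (H (Ordinal n0)).
  have h2 : 0 <= \sum_(i < n | i != Ordinal n0) radial (xs i).
    by apply: sumr_ge0 => i _; case: (H i) => _ /ltW.
  lra.
rewrite Ea; split.
  by apply: ler_piMl; [exact: ltW | rewrite invf_le1].
split.
  move=> Ha.
  have Hs : s^-1 = 1 by apply: (mulIf (lt0r_neq0 a0)); rewrite mul1r.
  have Hs1 : s = 1 by rewrite -[s]invrK Hs invr1.
  have HK : K * lorentz xbar xbar = 1.
    rewrite -[LHS]sqr_sqrtr ?(le_trans ler01) // -/s Hs1; exact: expr1n.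
  have SS : S = 0.
    move: HK; rewrite KL => /eqP; rewrite subr_eq addrC -subr_eq subrr eq_sym.
    rewrite !mulf_eq0 !invr_eq0 (lt_eqF K0) (gt_eqF nR) /= => /eqP //.
  move=> i j.
  have P0 : forall i j, 0 <= K^-1 - lorentz (xs i) (xs j).
    by move=> i' j'; case: (pairQ K0 (H i') (H j')).
  have Hi : \sum_(j < n) (K^-1 - lorentz (xs i) (xs j)) = 0.
    apply: (psumr_eq0P _ SS) => //= i' _; exact: sumr_ge0.
  have Hij : K^-1 - lorentz (xs i) (xs j) = 0.
    by apply: (psumr_eq0P _ Hi) => //= j' _; exact: P0.
  exact: (proj2 (pairQ K0 (H i) (H j)) Hij).
move=> Heq.
have SS : S = 0.
  apply: big1 => i _; apply: big1 => j _.
  by rewrite (Heq j i); case: (H i) => -> _; rewrite subrr.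
suff -> : s = 1 by rewrite invr1 mul1r.
by rewrite /s KL SS mulr0 subr0 sqrtr1.
Qed.
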